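(* Let $(X,d)$ be a metric space and let $\mathcal{B}$ be a bornology on $X$ with a closed base $\mathcal{B}_0$. Let $\tau_F$ and $\tau_F^s$ be the finest locally convex topologies of the extended locally convex spaces $(C(X),\tau_{\mathcal{B}})$ and $(C(X),\tau_{\mathcal{B}}^s)$, respectively. Then the following are equivalent: (i) $\tau_F=\tau_F^s$; (ii) $\tau_{\mathcal{B}}=\tau_{\mathcal{B}}^s$; (iii) $\mathcal{B}$ is shielded from closed sets.
   Context: $C(X)$ is the vector space of continuous real-valued functions on $(X,d)$. A bornology on $X$ is a family of nonempty subsets of $X$ covering $X$, closed under finite unions and under taking nonempty subsets; a base $\mathcal{B}_0$ is a subfamily cofinal under inclusion, and it is a closed base if its members are closed. $\tau_{\mathcal{B}}$ (uniform convergence on $\mathcal{B}$) is the topology on $C(X)$ induced by the extended seminorms $\rho_B(f)=\sup_{x\in B}|f(x)|$, $B\in\mathcal{B}_0$; $\tau_{\mathcal{B}}^s$ (strong uniform convergence on $\mathcal{B}$) is induced by the extended seminorms $\rho^s_B(f)=\inf_{\delta>0}\sup_{x\in B^\delta}|f(x)|$, $B\in\mathcal{B}_0$, where $B^\delta=\{x\in X: d(x,B)<\delta\}$. (A topology induced by a family $\{\rho_i\}$ of extended seminorms $\rho:V\to[0,\infty]$, i.e. absolutely homogeneous and subadditive maps, has as neighborhood base at $v_0$ the sets $\{v:\max_{i\in J}\rho_i(v-v_0)<\varepsilon\}$, $J$ finite; such a space is an extended locally convex space.) The finest locally convex topology of an extended locally convex space $(V,\tau)$ is the locally convex topology $\tau_F\subseteq\tau$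 (induced by finite-valued seminorms) such that every locally convex topology $\sigma\subseteq\tau$ on $V$ satisfies $\sigma\subseteq\tau_F$. For nonempty $A\subseteq X$, a superset $A_1\supseteq A$ is a shield for $A$ if for every closed $C\subseteq X$ with $C\cap A_1=\emptyset$ there is $\delta>0$ with $C\cap A^\delta=\emptyset$. $\mathcal{B}$ is shielded from closed sets if each $B\in\mathcal{B}$ has a shield belonging to $\mathcal{B}$. *)

(* Defs.v *)
From Stdlib Require List.
From mathcomp Require Import all_boot all_order all_algebra.
From mathcomp Require Import all_classical all_reals all_analysis.
Set Implicit Arguments. Unset Strict Implicit. Unset Printing Implicit Defensive.
Import Order.TTheory GRing.Theory Num.Theory.
Local Open Scope classical_set_scope.
Local Open Scope ring_scope.

Section Defs.
Variables (R : realType) (X : Type) (d : X -> X -> R).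

Definition is_metric : Prop :=
  [/\ forall x y, 0 <= d x y,
      forall x y, d x y = 0 <-> x = y,
      forall x y, d x y = d y x
    & forall x y z, d x z <= d x y + d y z].

Definition dcontinuous (f : X -> R) : Prop :=
  forall x (e : R), 0 < e -> exists2 del : R, 0 < del &
    forall y, d x y < del -> `|f y - f x| < e.

Definition CX : set (X -> R) := [set f | dcontinuous f].

Definition dclosed (A : set X) : Prop :=
  forall x, (forall del : R, 0 < del -> exists2 a, A a & d x a < del) -> A x.

(* B^delta = {x : d(x,B) < delta}; d(x,B) < delta iff some b in B has d(x,b) < delta *)
Definition enlarge (B : set X) (del : R) : set X :=
  [set x | exists2 b, B b & d x b < del].

Definition bornology (Bor : set (set X)) : Prop :=
  [/\ forall B, Bor B -> B !=set0,
      forall x, exists2 B, Bor B & B x,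
      forall A B, Bor A -> Bor B -> Bor (A `|` B)
    & forall A B, Bor B -> A `<=` B -> A !=set0 -> Bor A].

Definition closed_base (Bor B0 : set (set X)) : Prop :=
  [/\ B0 `<=` Bor,
      forall B, Bor B -> exists2 B', B0 B' & B `<=` B'
    & forall B, B0 B -> dclosed B].

Definition rho (B : set X) (f : X -> R) : \bar R :=
  ereal_sup [set (`|f x|)%:E | x in B].

Definition rho_s (B : set X) (f : X -> R) : \bar R :=
  ereal_inf [set rho (enlarge B del) f | del in [set del : R | 0 < del]].

Definition induced_top (N : set ((X -> R) -> \bar R)) : set (set (X -> R)) :=
  [set U | U `<=` CX /\
    forall f0, U f0 -> exists J : seq ((X -> R) -> \bar R),
      (forall p, List.In p J -> N p) /\
      exists2 e : R, 0 < e &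
        forall g, CX g -> (forall p, List.In p J -> (p (fun x => (g x - f0 x)%R) < e%:E)%E) -> U g].

Definition seminorm (p : (X -> R) -> R) : Prop :=
  (forall (a : R) f, CX f -> p (fun x => a * f x) = `|a| * p f) /\
  (forall f g, CX f -> CX g -> p (fun x => f x + g x) <= p f + p g).

Definition locally_convex (T : set (set (X -> R))) : Prop :=
  exists P : set ((X -> R) -> R), (forall p, P p -> seminorm p) /\
    T = induced_top [set (fun f => (p f)%:E) | p in P].

Definition finest_lc (T TF : set (set (X -> R))) : Prop :=
  [/\ locally_convex TF, TF `<=` T &
      forall S, locally_convex S -> S `<=` T -> S `<=` TF].

Definition tau_B (B0 : set (set X)) := induced_top [set rho B | B in B0].
Definition tau_Bs (B0 : set (set X)) := induced_top [set rho_s B | B in B0].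

Definition is_shield (A A1 : set X) : Prop :=
  A `<=` A1 /\ forall C, dclosed C -> C `&` A1 = set0 ->
    exists2 del : R, 0 < del & C `&` enlarge A del = set0.

Definition shielded_from_closed (Bor : set (set X)) : Prop :=
  forall B, Bor B -> exists2 A1, Bor A1 & is_shield B A1.

End Defs.

(* Main.v *)
Require Import Defs.
From mathcomp Require Import all_boot all_order all_algebra.
From mathcomp Require Import all_classical all_reals all_analysis.
From mathcomp Require Import ring lra.
Set Implicit Arguments. Unset Strict Implicit. Unset Printing Implicit Defensive.
Import Order.TTheory GRing.Theory Num.Theory.
Import numFieldNormedType.Exports.
Local Open Scope classical_set_scope.
Local Open Scope ring_scope.

Section Aux.
Variables (R : realType) (X : Type) (d : X -> X -> R).

Lemma rho_ltP (B : set X) (f : X -> R) (e : R) :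
  (rho B f < e%:E)%E <-> exists2 r : R, r < e & forall x, B x -> `|f x| <= r.
Proof.
split.
- move=> H.
  have ub : forall x, B x -> ((`|f x|)%:E <= rho B f)%E.
    by move=> x Bx; apply: ereal_sup_ubound; exists x.
  move: H ub; case: (rho B f) => [s| |] //=.
  + rewrite lte_fin => se ub; exists s => // x /ub; rewrite lee_fin.
  + move=> _ ub; exists (e - 1); first lra.
    by move=> x /ub.
- case=> r re H; apply: (@le_lt_trans _ _ r%:E); last by rewrite lte_fin.
  apply: ge_ereal_sup => _ [x Bx <-]; rewrite lee_fin; exact: H.
Qed.

Lemma rho_s_ltP (B : set X) f (e : R) :
  (rho_s d B f < e%:E)%E <->
  exists2 del : R, 0 < del & (rho (enlarge d B del) f < e%:E)%E.
Proof.
split.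
- by move=> /ereal_inf_lt [_ [del del0 <-]] H; exists del.
- case=> del del0 H; apply: le_lt_trans H; apply: ereal_inf_lbound; by exists del.
Qed.

Lemma rho_s_ltP' (B : set X) f (e : R) :
  (rho_s d B f < e%:E)%E <->
  exists2 del : R, 0 < del & exists2 r, r < e & forall x, enlarge d B del x -> `|f x| <= r.
Proof.
rewrite rho_s_ltP; split; case=> del del0 H; exists del => //; exact/rho_ltP.
Qed.

Lemma le_of_lt_all (a b : R) : (forall e, b < e -> a < e) -> a <= b.
Proof.
move=> H; rewrite leNgt; apply/negP => ba.
have := H ((a + b) / 2); lra.
Qed.

Definition dnbhs (x : X) : set_system X :=
  filter_from [set e : R | 0 < e] (fun e => [set y | d x y < e]).

Global Instance dnbhs_filter x : Filter (dnbhs x).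
Proof.
apply: filter_from_filter; first by exists 1; rewrite /= ltr01.
move=> i j i0 j0; exists (Num.min i j); first by rewrite /= lt_min i0 j0.
by move=> y /=; rewrite lt_min => /andP[].
Qed.

Lemma dcontP f : dcontinuous d f <-> forall x, (f @ dnbhs x --> f x).
Proof.
split=> H x.
- apply/cvgrPdist_lt => e e0. have [del del0 Hd] := H x e e0.
  exists del => // y /Hd; by rewrite distrC.
- move=> e e0; have := (cvgrPdist_lt _ _).1 (H x) e e0.
  rewrite /dnbhs /filter_from /=; case=> del del0 Hd.
  exists del => // y /Hd; by rewrite distrC.
Qed.

Lemma CX_cst c : CX d (fun _ => c).
Proof. by apply/dcontP => x; apply: cvg_cst. Qed.

Lemma CX_add f g : CX d f -> CX d g -> CX d (fun x => f x + g x).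
Proof. move=> /dcontP Hf /dcontP Hg; apply/dcontP => x; exact: cvgD. Qed.

Lemma CX_sub f g : CX d f -> CX d g -> CX d (fun x => f x - g x).
Proof. move=> /dcontP Hf /dcontP Hg; apply/dcontP => x; exact: cvgB. Qed.

Lemma CX_scale a f : CX d f -> CX d (fun x => a * f x).
Proof. move=> /dcontP Hf; apply/dcontP => x; apply: cvgM => //; exact: cvg_cst. Qed.

End Aux.

Section Metric.
Variables (R : realType) (X : Type) (d : X -> X -> R).
Hypothesis hm : is_metric d.

Lemma d_ge0 x y : 0 <= d x y. Proof. by case: hm. Qed.
Lemma d_xx x : d x x = 0. Proof. by case: hm => _ H _ _; apply/H. Qed.
Lemma d_sym x y : d x y = d y x. Proof. by case: hm. Qed.
Lemma d_tri x y z : d x z <= d x y + d y z. Proof. by case: hm. Qed.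

Definition dist (A : set X) (x : X) : R := inf [set d x a | a in A].

Lemma dist_ge0 A x : A !=set0 -> 0 <= dist A x.
Proof.
case=> a Aa; apply: lb_le_inf; first by exists (d x a), a.
by move=> _ [b _ <-]; exact: d_ge0.
Qed.

Lemma dist_le A x a : A a -> dist A x <= d x a.
Proof.
move=> Aa; apply: ge_inf; last by exists a.
by exists 0 => _ [b _ <-]; exact: d_ge0.
Qed.

Lemma dist_lip A x y : A !=set0 -> dist A x <= d x y + dist A y.
Proof.
case=> a Aa.
suff : dist A x - d x y <= dist A y by lra.
apply: lb_le_inf; first by exists (d y a), a.
move=> _ [b Ab <-]; have := dist_le x Ab; have := d_tri x y b; lra.
Qed.

Lemma dist_in A x : A x -> dist A x = 0.
Proof.
move=> Ax; apply/le_anti; rewrite dist_ge0 ?andbT; last by exists x.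
by rewrite -(d_xx x); exact: dist_le.
Qed.

Lemma dist0_closed A x : dclosed d A -> A !=set0 -> dist A x <= 0 -> A x.
Proof.
move=> cA [a Aa] H; apply: cA => del del0.
have : inf [set d x a | a in A] < del by rewrite -/(dist A x); lra.
case/inf_lt; first by exists (d x a), a.
by move=> _ [b Ab <-] ?; exists b.
Qed.

Lemma dist_cont A : A !=set0 -> dcontinuous d (dist A).
Proof.
move=> A0 x e e0; exists e => // y dxy.
have := dist_lip x y A0; have := dist_lip y x A0; rewrite (d_sym y x).
rewrite ltr_norml => ? ?; apply/andP; split; lra.
Qed.

Lemma urysohn (A C : set X) : dclosed d A -> dclosed d C -> A !=set0 -> C !=set0 ->
  A `&` C = set0 ->
  exists g, [/\ CX d g, forall x, 0 <= g x <= 1, forall x, A x -> g x = 0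
    & forall x, C x -> g x = 1].
Proof.
move=> cA cC A0 C0 AC.
have pos : forall x, 0 < dist A x + dist C x.
  move=> x; have := dist_ge0 x A0; have := dist_ge0 x C0.
  rewrite le_eqVlt => /orP[/eqP hC|hC]; last by move=> ?; lra.
  rewrite le_eqVlt => /orP[/eqP hA|hA]; last by lra.
  have : (A `&` C) x by split; apply: dist0_closed => //; lra.
  by rewrite AC.
exists (fun x => dist A x / (dist A x + dist C x)); split.
- apply/dcontP => x; apply: cvgM; first exact: ((dcontP d (dist A)).1 (dist_cont A0) x).
  apply: cvgV; first by rewrite gt_eqF.
  by apply: cvgD; [exact: ((dcontP d (dist A)).1 (dist_cont A0) x)|exact: ((dcontP d (dist C)).1 (dist_cont C0) x)].
- move=> x; have := pos x; have := dist_ge0 x A0; have := dist_ge0 x C0 => h1 h2 h3.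
  apply/andP; split; first by apply: divr_ge0; lra.
  rewrite ler_pdivrMr // mul1r; lra.
- by move=> x Ax; rewrite dist_in // mul0r.
- move=> x Cx; rewrite (dist_in Cx) addr0 divff // gt_eqF //.
  by have := pos x; rewrite (dist_in Cx) addr0.
Qed.

End Metric.

Section Top.
Variables (R : realType) (X : Type) (d : X -> X -> R).

Lemma transfer (N1 N2 : set ((X -> R) -> \bar R)) :
  (forall p, N1 p -> exists2 q, N2 q & forall k, CX d k -> forall e : R, 0 < e ->
      (q k < (e/2)%:E)%E -> (p k < e%:E)%E) ->
  induced_top d N1 `<=` induced_top d N2.
Proof.
move=> H U [UC HU]; split => // f0 Uf0; have [J [JN [e e0 HJ]]] := HU f0 Uf0.
have [J' [J'N HJ']] : exists J', (forall q, List.In q J' -> N2 q) /\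
   forall k, CX d k -> (forall q, List.In q J' -> (q k < (e/2)%:E)%E) ->
     forall p, List.In p J -> (p k < e%:E)%E.
  clear HJ; elim: J JN => [|p J IH] JN.
    by exists nil; split => // k _ _ p [].
  have [|J' [J'N HJ']] := IH; first by move=> q Jq; apply: JN; right.
  have [q Nq Hq] := H p (JN p (or_introl erefl)).
  exists (q :: J'); split.
    by move=> q' [<-|/J'N].
  move=> k Ck Hk p' [<-|Jp'].
    by apply: Hq => //; apply: Hk; left.
  by apply: HJ' => // q' Jq'; apply: Hk; right.
exists J'; split => //; exists (e/2); first by rewrite divr_gt0.
move=> g Cg Hg; apply: HJ => //; apply: HJ' => //; apply: CX_sub => //; exact: UC.
Qed.

Lemma enlarge_mono (B : set X) (a b : R) : a <= b -> enlarge d B a `<=` enlarge d B b.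
Proof. by move=> ab x [y By dxy]; exists y => //; apply: lt_le_trans ab. Qed.

Lemma enlarge_sup (B : set X) (a : R) : is_metric d -> 0 < a -> B `<=` enlarge d B a.
Proof. by move=> hm a0 x Bx; exists x => //; rewrite d_xx. Qed.

Lemma closed_ge (k : X -> R) (c : R) : CX d k -> dclosed d [set x | c <= `|k x|].
Proof.
move=> Ck x H /=; rewrite leNgt; apply/negP => kx.
have := Ck x (c - `|k x|); rewrite subr_gt0 => /(_ kx) [del del0 Hd].
have [a /= Ca dxa] := H del del0.
have := Hd a dxa; have := ler_normD (k a - k x) (k x); rewrite subrK; lra.
Qed.

Lemma dclosedU (A B : set X) : dclosed d A -> dclosed d B -> dclosed d (A `|` B).
Proof.
move=> cA cB x H.
have [Ax|nA] := pselect (A x); first by left.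
have [Bx|nB] := pselect (B x); first by right.
have : ~ (forall del : R, 0 < del -> exists2 a, A a & d x a < del) by move/cA.
move/existsNP => [dA /not_implyP [dA0 nA']].
have : ~ (forall del : R, 0 < del -> exists2 a, B a & d x a < del) by move/cB.
move/existsNP => [dB /not_implyP [dB0 nB']].
have := H (Num.min dA dB); rewrite lt_min dA0 dB0 => /(_ isT) [a [Aa|Ba]].
  by rewrite lt_min => /andP[h _]; exfalso; apply: nA'; exists a.
by rewrite lt_min => /andP[_ h]; exfalso; apply: nB'; exists a.
Qed.

Lemma tauB_sub B0 : is_metric d -> tau_B d B0 `<=` tau_Bs d B0.
Proof.
move=> hm; apply: transfer => _ [B B0B <-]; exists (rho_s d B); first by exists B.
move=> k Ck e e0 /rho_s_ltP' [del del0 [r re Hr]]; apply/rho_ltP; exists r; first lra.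
by move=> x Bx; apply: Hr; apply: enlarge_sup.
Qed.

Lemma shield_sub Bor B0 : is_metric d -> closed_base d Bor B0 ->
  shielded_from_closed d Bor -> tau_Bs d B0 `<=` tau_B d B0.
Proof.
move=> hm [B0Bor cov _] sh; apply: transfer => _ [B B0B <-].
have [A1 BorA1 [BA1 shA1]] := sh B (B0Bor B B0B).
have [B' B0B' A1B'] := cov A1 BorA1.
exists (rho B'); first by exists B'.
move=> k Ck e e0 /rho_ltP [r re Hr].
have [del del0 Hdel] : exists2 del : R, 0 < del &
    [set x | e/2 <= `|k x|] `&` enlarge d B del = set0.
  apply: shA1; first exact: closed_ge.
  by apply/seteqP; split => // x [/= h1 /A1B' /Hr h2]; lra.
apply/rho_s_ltP'; exists del => //; exists (e/2); first lra.
move=> x Ex; rewrite leNgt; apply/negP => kx.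
have : ([set x | e/2 <= `|k x|] `&` enlarge d B del) x by split => //=; lra.
by rewrite Hdel.
Qed.

End Top.

Section Fin.
Variables (R : realType) (X : Type) (d : X -> X -> R) (B1 : set X).
Hypotheses (hm : is_metric d) (B1n : B1 !=set0).

Definition Fs (k : X -> R) := CX d k /\ (rho_s d B1 k < +oo)%E.
Definition vv (k : X -> R) : R := fine (rho_s d B1 k).

Lemma rho_s_ge0 k : (0 <= rho_s d B1 k)%E.
Proof.
rewrite leNgt; apply/negP => /rho_s_ltP' [del del0 [r r0 Hr]].
case: B1n => b Bb; have := Hr b (enlarge_sup hm del0 Bb); have := normr_ge0 (k b); lra.
Qed.

Lemma Fs_fin k : Fs k -> (vv k)%:E = rho_s d B1 k.
Proof. case=> _ h; rewrite fineK // ge0_fin_numE //; exact: rho_s_ge0. Qed.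

Lemma vv_ltP k e : Fs k -> vv k < e <-> (rho_s d B1 k < e%:E)%E.
Proof. move=> Fk; by rewrite -(Fs_fin Fk) lte_fin. Qed.

Lemma vv_ltP' k e : Fs k -> vv k < e <-> exists2 del, 0 < del &
  exists2 r, r < e & forall x, enlarge d B1 del x -> `|k x| <= r.
Proof. move=> Fk; rewrite vv_ltP //; exact: rho_s_ltP'. Qed.

Lemma vv_ge0 k : 0 <= vv k.
Proof.
rewrite /vv; have := rho_s_ge0 k; case: (rho_s d B1 k) => //= r; by rewrite lee_fin.
Qed.

Lemma Fs_of k e : CX d k -> (rho_s d B1 k < e%:E)%E -> Fs k.
Proof. move=> Ck h; split => //; apply: lt_trans h _; exact: ltry. Qed.

Lemma min_le1 (a b : R) : Num.min a b <= a. Proof. by rewrite ge_min lexx. Qed.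
Lemma min_le2 (a b : R) : Num.min a b <= b. Proof. by rewrite ge_min lexx orbT. Qed.

Lemma Fs_lin a h1 h2 : Fs h1 -> Fs h2 -> Fs (fun x => a * h1 x + h2 x).
Proof.
move=> F1 F2.
have /(vv_ltP' _ F1) [d1 d10 [r1 _ H1]] : vv h1 < vv h1 + 1 by lra.
have /(vv_ltP' _ F2) [d2 d20 [r2 _ H2]] : vv h2 < vv h2 + 1 by lra.
apply: (@Fs_of _ (`|a| * r1 + r2 + 1)).
  apply: CX_add; [apply: CX_scale; exact: F1.1|exact: F2.1].
apply/rho_s_ltP'; exists (Num.min d1 d2); first by rewrite lt_min d10 d20.
exists (`|a| * r1 + r2); first lra.
move=> x Ex.
have E1 := H1 x (enlarge_mono (min_le1 d1 d2) Ex).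
have E2 := H2 x (enlarge_mono (min_le2 d1 d2) Ex).
apply: le_trans (ler_normD _ _) _; rewrite normrM; apply: lerD => //.
by apply: ler_wpM2l.
Qed.

Lemma Fs_zero : Fs (fun _ => 0).
Proof.
apply: (@Fs_of _ 1); first exact: CX_cst.
apply/rho_s_ltP'; exists 1 => //; exists 0 => //.
by move=> x _; rewrite normr0.
Qed.

Lemma Fs_scale a h : Fs h -> Fs (fun x => a * h x).
Proof.
move=> Fh; have := Fs_lin a Fh Fs_zero.
by have -> : (fun x => a * h x + 0) = (fun x => a * h x) by apply: funext => x; rewrite addr0.
Qed.

Lemma Fs_add h1 h2 : Fs h1 -> Fs h2 -> Fs (fun x => h1 x + h2 x).
Proof.
move=> F1 F2; have := Fs_lin 1 F1 F2.
by have -> : (fun x => 1 * h1 x + h2 x) = (fun x => h1 x + h2 x) by apply: funext => x; rewrite mul1r.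
Qed.

Lemma vv_scale_le a h : Fs h -> vv (fun x => a * h x) <= `|a| * vv h.
Proof.
move=> Fh; apply: le_of_lt_all => e He.
have [a0|a0] := eqVneq a 0.
  have Fa := Fs_scale a Fh; rewrite a0 in He Fa *.
  have e0 : 0 < e by apply: le_lt_trans He; rewrite mulr_ge0 ?vv_ge0.
  apply/(vv_ltP' _ Fa); exists 1 => //; exists 0 => // x _.
  by rewrite mul0r normr0.
have Fa := Fs_scale a Fh.
have na0 : 0 < `|a| by rewrite normr_gt0.
have : vv h < e / `|a| by rewrite ltr_pdivlMr // mulrC.
case/(vv_ltP' _ Fh) => del del0 [r re Hr].
apply/(vv_ltP' _ Fa); exists del => //; exists (`|a| * r).
  by move: re; rewrite ltr_pdivlMr // mulrC.
move=> x Ex; rewrite normrM; apply: ler_wpM2l => //; exact: Hr.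
Qed.

Lemma vv_scale a h : Fs h -> vv (fun x => a * h x) = `|a| * vv h.
Proof.
move=> Fh; apply/le_anti; rewrite vv_scale_le //=.
have [->|a0] := eqVneq a 0; first by rewrite normr0 mul0r vv_ge0.
have Fa := Fs_scale a Fh.
have := vv_scale_le (a^-1) Fa.
have -> : (fun x => a^-1 * (a * h x)) = h by apply: funext => x; rewrite mulrA mulVf // mul1r.
rewrite normrV ?unitfE // => H.
have na0 : 0 < `|a| by rewrite normr_gt0.
by rewrite -ler_pdivlMl // mulrC.
Qed.

Lemma vv_add h1 h2 : Fs h1 -> Fs h2 -> vv (fun x => h1 x + h2 x) <= vv h1 + vv h2.
Proof.
move=> F1 F2; apply: le_of_lt_all => e He.
pose t := (e - vv h1 - vv h2) / 2.
have t0 : 0 < t by rewrite /t divr_gt0 //; lra.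
have /(vv_ltP' _ F1) [d1 d10 [r1 r1e H1]] : vv h1 < vv h1 + t by lra.
have /(vv_ltP' _ F2) [d2 d20 [r2 r2e H2]] : vv h2 < vv h2 + t by lra.
apply/(vv_ltP' _ (Fs_add F1 F2)); exists (Num.min d1 d2); first by rewrite lt_min d10 d20.
exists (r1 + r2); first by rewrite /t in r1e r2e *; lra.
move=> x Ex.
have E1 := H1 x (enlarge_mono (min_le1 d1 d2) Ex).
have E2 := H2 x (enlarge_mono (min_le2 d1 d2) Ex).
apply: le_trans (ler_normD _ _) _; exact: lerD.
Qed.

Lemma Fs_bounded g : CX d g -> (forall x, 0 <= g x <= 1) -> Fs g.
Proof.
move=> Cg Hg; apply: (@Fs_of _ 2) => //.
apply/rho_s_ltP'; exists 1 => //; exists 1; first lra.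
move=> x _; have /andP[h1 h2] := Hg x; rewrite ger0_norm //.
Qed.

End Fin.

Section Compl.
Variables (R : realType) (X : Type) (d : X -> X -> R) (F : set (X -> R)).
Hypotheses (F0 : F (fun _ => 0)) (FC : F `<=` CX d)
  (Flin : forall a h1 h2, F h1 -> F h2 -> F (fun x => a * h1 x + h2 x)).

Definition G0 (G : set (X -> R)) g := G g \/ g = (fun _ => 0).

Definition admissible (G : set (X -> R)) :=
  [/\ G `<=` CX d,
      forall a g1 g2, G0 G g1 -> G0 G g2 -> G0 G (fun x => a * g1 x + g2 x)
    & forall g, G g -> F g -> g = (fun _ => 0)].

Lemma G0_CX G g : G `<=` CX d -> G0 G g -> CX d g.
Proof. by move=> GC [/GC|->] //; exact: CX_cst. Qed.

Lemma exists_max : exists G, admissible G /\ forall G', G `<` G' -> ~ admissible G'.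
Proof.
apply: Zorn_bigcup => Fam FamP tot; split.
- by move=> g [G FG Gg]; have [GC _ _] := FamP G FG; exact: GC.
- move=> a g1 g2 H1 H2.
  case: H1 => [[G1 FG1 G1g1]|e1]; case: H2 => [[G2 FG2 G2g2]|e2].
  + have [s12|s21] := tot _ _ FG1 FG2.
    * have [_ cl _] := FamP _ FG2.
      case: (cl a g1 g2 (or_introl (s12 _ G1g1)) (or_introl G2g2)) => [h|->].
        by left; exists G2.
      by right.
    * have [_ cl _] := FamP _ FG1.
      case: (cl a g1 g2 (or_introl G1g1) (or_introl (s21 _ G2g2))) => [h|->].
        by left; exists G1.
      by right.
  + have [_ cl _] := FamP _ FG1.
    case: (cl a g1 g2 (or_introl G1g1) (or_intror e2)) => [h|->].
      by left; exists G1.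
    by right.
  + have [_ cl _] := FamP _ FG2.
    case: (cl a g1 g2 (or_intror e1) (or_introl G2g2)) => [h|->].
      by left; exists G2.
    by right.
  + right; rewrite e1 e2; apply: funext => x; ring.
- by move=> g [G FG Gg] Fg; have [_ _ dj] := FamP _ FG; exact: dj.
Qed.

Lemma decomp : exists G, admissible G /\
  forall f, CX d f -> exists h, F h /\ G0 G (fun x => f x - h x).
Proof.
have [G [[GC cl dj] mx]] := exists_max.
exists G; split => // f Cf.
apply: contrapT => nex.
pose G' := [set k | exists g, exists a : R, G0 G g /\ k = (fun x => g x + a * f x)].
apply: (mx G'); last first.
- split.
  + move=> k [g [a [Gg ->]]]; apply: CX_add; [exact: G0_CX Gg|exact: CX_scale].
  + have toG' : forall k, G0 G' k -> G' k.
      move=> k [//|->]; exists (fun _ => 0), 0; split; first by right.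
      by apply: funext => x; rewrite mul0r addr0.
    move=> c k1 k2 /toG' [g1 [a1 [G1 ->]]] /toG' [g2 [a2 [G2 ->]]]; left.
    exists (fun x => c * g1 x + g2 x), (c * a1 + a2); split; first exact: cl.
    by apply: funext => x; ring.
  + move=> k [g [a [Gg ->]]] Fk.
    have [a0|a0] := eqVneq a 0.
      have eq : (fun x => g x + a * f x) = g.
        by rewrite a0; apply: funext => x; rewrite mul0r addr0.
      rewrite eq in Fk *; case: Gg => [Gg|//]; exact: dj.
    exfalso; apply: nex; exists (fun x => a^-1 * (g x + a * f x) + 0); split.
      exact: (Flin _ Fk F0).
    have := cl (- a^-1) g (fun _ => 0) Gg (or_intror erefl).
    have -> : (fun x => - a^-1 * g x + 0) = (fun x => f x - (a^-1 * (g x + a * f x) + 0)) => //.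
    by apply: funext => x; rewrite mulrDr mulrA mulVf // mul1r; ring.
- split.
  + move=> g Gg; exists g, 0; split; first by left.
    by apply: funext => x; rewrite mul0r addr0.
  + move=> sub.
    have G'f : G' f.
      exists (fun _ => 0), 1; split; first by right.
      by apply: funext => x; rewrite mul1r add0r.
    apply: nex; exists (fun _ => 0); split => //; left.
    have -> : (fun x => f x - 0) = f by apply: funext => x; rewrite subr0.
    exact: sub.
Qed.

Lemma complement : exists pi : (X -> R) -> (X -> R),
  [/\ forall f, CX d f -> F (pi f),
      forall f, F f -> pi f = f,
      forall a f, CX d f -> pi (fun x => a * f x) = (fun x => a * pi f x) &
      forall f g, CX d f -> CX d g ->
        pi (fun x => f x + g x) = (fun x => pi f x + pi g x)].
Proof.
have [G [[GC cl dj] dec]] := decomp.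
have : forall f, exists h, CX d f -> F h /\ G0 G (fun x => f x - h x).
  move=> f; have [Cf|nCf] := pselect (CX d f).
    by have [h Hh] := dec f Cf; exists h.
  by exists (fun _ => 0).
case/choice => pi Hpi.
have uniq : forall f h1 h2, F h1 -> F h2 -> G0 G (fun x => f x - h1 x) ->
    G0 G (fun x => f x - h2 x) -> h1 = h2.
  move=> f h1 h2 F1 F2 G1 G2.
  have Gd := cl (-1) _ _ G1 G2.
  have Fd := Flin (-1) F2 F1.
  have eq : (fun x => -1 * (f x - h1 x) + (f x - h2 x)) = (fun x => -1 * h2 x + h1 x).
    by apply: funext => x; ring.
  rewrite eq in Gd.
  have z0 : (fun x => -1 * h2 x + h1 x) = (fun _ => 0).
    by case: Gd => [/dj|//]; apply.
  apply: funext => x; have := congr1 (fun k => k x) z0 => /=; lra.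
exists pi; split.
- by move=> f /Hpi [].
- move=> f Ff; have [Fp Gp] := Hpi f (FC Ff).
  apply: (uniq f) => //; right.
  by apply: funext => x; rewrite subrr.
- move=> a f Cf; have [Fp Gp] := Hpi f Cf.
  have [Fpa Gpa] := Hpi _ (CX_scale a Cf).
  apply: (uniq (fun x => a * f x)) => //.
    have := Flin a Fp F0.
    by have -> : (fun x => a * pi f x + 0) = (fun x => a * pi f x) by apply: funext => x; rewrite addr0.
  have := cl a _ (fun _ => 0) Gp (or_intror erefl).
  by have -> : (fun x => a * (f x - pi f x) + 0) = (fun x => a * f x - a * pi f x) by apply: funext => x; ring.
- move=> f g Cf Cg; have [Fpf Gpf] := Hpi f Cf; have [Fpg Gpg] := Hpi g Cg.
  have [Fps Gps] := Hpi _ (CX_add Cf Cg).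
  apply: (uniq (fun x => f x + g x)) => //.
    have := Flin 1 Fpf Fpg.
    by have -> : (fun x => 1 * pi f x + pi g x) = (fun x => pi f x + pi g x) by apply: funext => x; rewrite mul1r.
  have := cl 1 _ _ Gpf Gpg.
  by have -> : (fun x => 1 * (f x - pi f x) + (g x - pi g x)) = (fun x => f x + g x - (pi f x + pi g x)) by apply: funext => x; ring.
Qed.

End Compl.

Section Final.
Variables (R : realType) (X : Type) (d : X -> X -> R).

Lemma exists_p0 (B1 : set X) : is_metric d -> B1 !=set0 ->
  exists p0 : (X -> R) -> R, [/\ seminorm d p0,
    forall k, CX d k -> forall e : R, (rho_s d B1 k < e%:E)%E -> p0 k < e &
    forall g, CX d g -> (forall x, 0 <= g x <= 1) -> p0 g < 1 ->
      (rho_s d B1 g < 1%:E)%E].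
Proof.
move=> hm B1n.
have F0 : Fs d B1 (fun _ => 0) by apply: Fs_zero.
have FC : Fs d B1 `<=` CX d by move=> k [].
have Flin : forall a h1 h2, Fs d B1 h1 -> Fs d B1 h2 ->
    Fs d B1 (fun x => a * h1 x + h2 x) by move=> a h1 h2 H1 H2; apply: Fs_lin.
have [pi [piF piid pisc piadd]] := @complement R X d (Fs d B1) F0 FC Flin.
exists (fun f => vv d B1 (pi f)); split.
- split.
  + move=> a f Cf /=; rewrite (pisc a f Cf); apply: vv_scale => //; exact: piF.
  + move=> f g Cf Cg /=; rewrite (piadd f g Cf Cg); apply: vv_add => //; exact: piF.
- move=> k Ck e H /=; have Fk : Fs d B1 k by apply: Fs_of Ck H.
  by rewrite (piid _ Fk); apply/vv_ltP.
- move=> g Cg g01 /=; have Fg : Fs d B1 g by apply: Fs_bounded.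
  by rewrite (piid _ Fg) => /vv_ltP; apply.
Qed.

Lemma key Bor B0 B1 U : is_metric d -> bornology Bor -> closed_base d Bor B0 -> B0 B1 ->
  (forall A1, Bor A1 -> ~ is_shield d B1 A1) ->
  tau_B d B0 U -> U (fun _ => 0) ->
  exists g, [/\ U g, CX d g, forall x, 0 <= g x <= 1 &
     forall del, 0 < del -> exists2 x, enlarge d B1 del x & g x = 1].
Proof.
move=> hm [bne _ bU _] [B0Bor cov B0cl] B0B1 nsh [UC HU] U0.
have [J [JN [e e0 HJ]]] := HU _ U0.
have [A [BorA clA B1A HA]] : exists A, [/\ Bor A, dclosed d A, B1 `<=` A &
    forall p, List.In p J -> exists2 A', A' `<=` A & p = rho A'].
  clear HJ; elim: J JN => [|p J IH] JN.
    exists B1; split => //; [exact: B0Bor | exact: B0cl].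
  have [|A [BorA clA B1A HA]] := IH; first by move=> q Jq; apply: JN; right.
  have [A' B0A' <-] := JN p (or_introl erefl).
  exists (A `|` A'); split.
  - exact: bU BorA (B0Bor _ B0A').
  - exact: dclosedU clA (B0cl _ B0A').
  - by move=> x /B1A; left.
  - move=> q [<-|Jq]; first by exists A' => // x; right.
    by have [A'' sub ->] := HA q Jq; exists A'' => // x /sub; left.
have := nsh A BorA; rewrite /is_shield => /not_andP [//|].
move/existsNP => [C /not_implyP [clC /not_implyP [CA nex]]].
have hC : forall del, 0 < del -> exists2 x, C x & enlarge d B1 del x.
  move=> del del0; apply: contrapT => nx; apply: nex; exists del => //.
  by apply/seteqP; split => // x [Cx Ex]; apply: nx; exists x.
have A0 : A !=set0 by have [b Bb] := bne _ (B0Bor _ B0B1); exists b; apply: B1A.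
have C0 : C !=set0 by have [x Cx _] := hC 1 ltr01; exists x.
have AC : A `&` C = set0 by rewrite setIC.
have [g [Cg g01 gA gC]] := urysohn hm clA clC A0 C0 AC.
exists g; split => //.
- apply: HJ => // p Jp; have [A' sub ->] := HA p Jp.
  by apply/rho_ltP; exists 0 => // x /sub /gA ->; rewrite subr0 normr0.
- move=> del del0; have [x Cx Ex] := hC del del0; exists x => //; exact: gC.
Qed.

Lemma no_rho_s_lt1 B1 g :
  (forall del, 0 < del -> exists2 x, enlarge d B1 del x & g x = 1) ->
  ~ (rho_s d B1 g < 1%:E)%E.
Proof.
move=> H /rho_s_ltP' [del del0 [r r1 Hr]]; have [x Ex gx] := H del del0.
by have := Hr x Ex; rewrite gx normr1; lra.
Qed.

Lemma no_shield Bor B0 : closed_base d Bor B0 -> ~ shielded_from_closed d Bor ->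
  exists2 B1, B0 B1 & forall A1, Bor A1 -> ~ is_shield d B1 A1.
Proof.
move=> [B0Bor cov _] ns.
have : exists B, ~ (Bor B -> exists2 A1, Bor A1 & is_shield d B A1).
  by apply/existsNP; exact: ns.
case=> B /not_implyP [BorB nex].
have [B1 B0B1 BB1] := cov B BorB.
exists B1 => // A1 BorA1 [B1A1 sh]; apply: nex; exists A1 => //; split.
  by move=> x /BB1 /B1A1.
move=> C clC CA; have [del del0 H] := sh C clC CA; exists del => //.
apply/seteqP; split => // x [Cx [b Bb dxb]].
have : (C `&` enlarge d B1 del) x by split => //; exists b => //; exact: BB1.
by rewrite H.
Qed.

End Final.

Theorem theorem3p15 (R : realType) (X : Type) (d : X -> X -> R)
  (Bor B0 : set (set X)) (tF tFs : set (set (X -> R))) :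
  is_metric d -> bornology Bor -> closed_base d Bor B0 ->
  finest_lc d (tau_B d B0) tF -> finest_lc d (tau_Bs d B0) tFs ->
  (tF = tFs <-> tau_B d B0 = tau_Bs d B0) /\
  (tau_B d B0 = tau_Bs d B0 <-> shielded_from_closed d Bor).
Proof.
move=> hm hb hcb [lcF FT maxF] [lcFs FsT maxFs].
have sub1 : tau_B d B0 `<=` tau_Bs d B0 by apply: tauB_sub.
have iii_ii : shielded_from_closed d Bor -> tau_B d B0 = tau_Bs d B0.
  move=> sh; apply/seteqP; split; [exact: sub1 | exact: shield_sub hm hcb sh].
have ii_iii : tau_B d B0 = tau_Bs d B0 -> shielded_from_closed d Bor.
  move=> eq; apply: contrapT => ns.
  have [B1 B0B1 nsh] := no_shield hcb ns.
  pose U := [set f | CX d f /\ (rho_s d B1 f < 1%:E)%E].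
  have UBs : tau_Bs d B0 U.
    split; first by move=> f [].
    move=> f0 [Cf0 /rho_s_ltP' [d0 d00 [r0 r01 H0]]].
    exists [:: rho_s d B1]; split.
      by move=> p [<-|[]]; exists B1.
    exists (1 - r0); first lra.
    move=> g Cg /(_ _ (or_introl erefl)) /rho_s_ltP' [d1 d10 [r1 r1e H1]].
    split => //; apply/rho_s_ltP'; exists (Num.min d0 d1); first by rewrite lt_min d00 d10.
    exists (r1 + r0); first lra.
    move=> x Ex.
    have E0 := H0 x (enlarge_mono (min_le1 d0 d1) Ex).
    have E1 := H1 x (enlarge_mono (min_le2 d0 d1) Ex).
    have := ler_normD (g x - f0 x) (f0 x); rewrite subrK /=; lra.
  have U0 : U (fun _ => 0).
    split; first exact: CX_cst.
    apply/rho_s_ltP'; exists 1 => //; exists 0 => // x _; by rewrite normr0.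
  rewrite -eq in UBs.
  have [g [[_ Ug] _ _ Hg]] := key hm hb hcb B0B1 nsh UBs U0.
  exact: no_rho_s_lt1 Hg Ug.
have i_iii : tF = tFs -> shielded_from_closed d Bor.
  move=> eq; apply: contrapT => ns.
  have [B1 B0B1 nsh] := no_shield hcb ns.
  have B1n : B1 !=set0 by case: hb => bne _ _ _; apply: bne; case: hcb => B0Bor _ _; exact: B0Bor.
  have [p0 [[hom sad] P2 P3]] := exists_p0 hm B1n.
  pose S := induced_top d [set (fun f => (p f)%:E) | p in [set p0]].
  have lcS : Defs.locally_convex d S.
    by exists [set p0]; split => // p ->; split.
  have SBs : S `<=` tau_Bs d B0.
    apply: transfer => _ [p -> <-]; exists (rho_s d B1); first by exists B1.
    move=> k Ck e e0 H; rewrite lte_fin; apply: P2 => //.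
    apply: lt_le_trans H _; rewrite lee_fin; lra.
  have SF : S `<=` tF by rewrite eq; exact: maxFs lcS SBs.
  pose U := [set f | CX d f /\ p0 f < 1].
  have US : S U.
    split; first by move=> f [].
    move=> f0 [Cf0 H0].
    exists [:: (fun f => (p0 f)%:E)]; split.
      by move=> p [<-|[]]; exists p0.
    exists (1 - p0 f0); first lra.
    move=> g Cg /(_ _ (or_introl erefl)); rewrite lte_fin => H1.
    split => //.
    have := sad _ _ (CX_sub Cg Cf0) Cf0.
    have -> : (fun x => g x - f0 x + f0 x) = g by apply: funext => x; rewrite subrK.
    lra.
  have U0 : U (fun _ => 0).
    split; first exact: CX_cst.
    have := hom 0 (fun _ => 0) (CX_cst d 0); rewrite normr0 !mul0r => ->.
    exact: ltr01.
  have [g [[Cg Ug] _ g01 Hg]] := key hm hb hcb B0B1 nsh (FT _ (SF _ US)) U0.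
  exact: no_rho_s_lt1 Hg (P3 g Cg g01 Ug).
split; split.
- by move=> eq; exact: iii_ii (i_iii eq).
- move=> eq; apply/seteqP; split.
  + by apply: maxFs => //; rewrite -eq; exact: FT.
  + by apply: maxF => //; rewrite eq; exact: FsT.
- exact: ii_iii.
- exact: iii_ii.
Qed.
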